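(* Let $G$ be a decomposable (chordal) undirected graph on $\{1,\dots,d\}$ whose largest clique has size three, and consider the palindromic Ising model with concentration graph $G$: the set of positive distributions $p$ on $\{0,1\}^d$ that are palindromic, have log-linear interactions $\lambda_b=0$ for all $|b|\ge3$, and have $\lambda_{\{i,j\}}=0$ whenever $\{i,j\}$ is not an edge of $G$. Given a random sample of size $n$ with cell counts $n(a)$, $a\in\{0,1\}^d$, the maximum likelihood estimate of $p$ in this model is obtained in closed form from the marginal correlations of the symmetrized $2\times 2$ tables of the pairs of variables within the 2-node and 3-node cliques of $G$, namely from the cross-sum differences $\hat\xi_{st}=\frac1n\sum_{a}(-1)^{a_s+a_t}n(a)$ for pairs $\{s,t\}$ contained in a clique of $G$.
   Context: Palindromic: $p(a)=p(\sim a)$ for all $a$, where $\sim a$ is the complement of the binary vector $a$. Log-linear interactions: $\lambda_b=2^{-d}\sum_a(-1)^{a\cdot b}\log p(a)$, $|b|=\sum_vb_v$. A clique is a maximal complete subset of nodes. The symmetrized counts are $\hat n(a)=\{n(a)+n(\sim a)\}/2$; the correlation of the $\pm1$-coded variables $(-1)^{A_s},(-1)^{A_t}$ in the symmetrized $2\times2$ marginal table of $(A_s,A_t)$ equals $\hat\xi_{st}$. *)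

(* Defs.v *)
From HB Require Import structures.
From mathcomp Require Import all_boot all_order all_algebra.
From mathcomp Require Import reals exp.
Set Implicit Arguments. Unset Strict Implicit. Unset Printing Implicit Defensive.
Import Order.TTheory GRing.Theory Num.Theory.
Local Open Scope ring_scope.

(* Vertices are 'I_d; a cell of the table is a binary vector a in {0,1}^d,
   encoded as a finite function 'I_d -> bool (true = 1). *)
Definition cell (d : nat) := {ffun 'I_d -> bool}.

Definition compl_cell d (a : cell d) : cell d := [ffun v => ~~ a v].

Definition sgnb (R : pzRingType) (b : bool) : R := if b then -1 else 1.

Definition simple_graph d (e : rel 'I_d) := symmetric e /\ irreflexive e.

Definition complete d (e : rel 'I_d) (C : {set 'I_d}) :=
  forall x y, x \in C -> y \in C -> x != y -> e x y.

Definition clique d (e : rel 'I_d) (C : {set 'I_d}) :=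
  complete e C /\ forall D : {set 'I_d}, complete e D -> C \subset D -> D = C.

Definition chordal d (e : rel 'I_d) :=
  forall (k : nat) (v : 'I_k -> 'I_d), (4 <= k)%N -> injective v ->
    (forall i : 'I_k, e (v i) (v (ordS i))) ->
    exists i j : 'I_k, [/\ j != i, j != ordS i, i != ordS j & e (v i) (v j)].

Definition max_clique_size3 d (e : rel 'I_d) :=
  (exists C, clique e C /\ #|C| = 3%N) /\ (forall C, clique e C -> (#|C| <= 3)%N).

Definition history d (cs : seq {set 'I_d}) (j : nat) : {set 'I_d} :=
  \bigcup_(i < j) nth set0 cs i.
Definition separator d (cs : seq {set 'I_d}) (j : nat) : {set 'I_d} :=
  nth set0 cs j :&: history cs j.

Definition perfect_clique_seq d (e : rel 'I_d) (cs : seq {set 'I_d}) :=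
  [/\ uniq cs,
      forall C, C \in cs -> clique e C,
      forall C, clique e C -> C \in cs &
      forall j, (0 < j < size cs)%N ->
        exists2 i, (i < j)%N & separator cs j \subset nth set0 cs i].

Section Model.
Variable R : realType.
Variable d : nat.

Definition palindromic (p : cell d -> R) := forall a, p a = p (compl_cell a).

(* lambda_b = 2^{-d} sum_a (-1)^{a.b} log p(a), with b identified with a subset *)
Definition lambda (p : cell d -> R) (b : {set 'I_d}) : R :=
  (2 ^+ d)^-1 * \sum_(a : cell d) sgnb R (odd #|[set v in b | a v]|) * ln (p a).

Definition is_distr (p : cell d -> R) :=
  (forall a, 0 < p a) /\ \sum_(a : cell d) p a = 1.

Definition pal_ising (e : rel 'I_d) (p : cell d -> R) :=
  [/\ is_distr p, palindromic p,
      forall b : {set 'I_d}, (3 <= #|b|)%N -> lambda p b = 0 &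
      forall i j : 'I_d, i != j -> ~~ e i j -> lambda p [set i; j] = 0].

Definition loglik (n : cell d -> nat) (p : cell d -> R) : R :=
  \sum_(a : cell d) (n a)%:R * ln (p a).

Definition is_unique_mle (e : rel 'I_d) (n : cell d -> nat) (p : cell d -> R) :=
  [/\ pal_ising e p,
      forall q, pal_ising e q -> loglik n q <= loglik n p &
      forall q, pal_ising e q -> loglik n q = loglik n p -> q = p].

Definition ssize (n : cell d -> nat) : nat := \sum_(a : cell d) n a.

Definition xi_hat (n : cell d -> nat) (s t : 'I_d) : R :=
  (ssize n)%:R^-1 * \sum_(a : cell d) sgnb R (a s (+) a t) * (n a)%:R.

(* symmetrized (palindromic) marginal of a set C of at most three nodes,
   determined by the correlations xi_st, s < t in C:
   2^{-|C|} (1 + sum_{s<t in C} (-1)^{a_s+a_t} xi_st) *)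
Definition fmarg (n : cell d -> nat) (C : {set 'I_d}) (a : cell d) : R :=
  (2 ^+ #|C|)^-1 *
  (1 + \sum_(s in C) \sum_(t in C | (s < t)%N) sgnb R (a s (+) a t) * xi_hat n s t).

Definition closed_form (n : cell d -> nat) (cs : seq {set 'I_d}) (a : cell d) : R :=
  (\prod_(j < size cs) fmarg n (nth set0 cs j) a) /
  (\prod_(1 <= j < size cs) fmarg n (separator cs j) a).

End Model.

(* Main.v *)
Require Import Defs.
From HB Require Import structures.
From mathcomp Require Import all_boot all_order all_algebra.
From mathcomp Require Import reals exp.
From mathcomp.algebra_tactics Require Import ring lra.
From Stdlib Require Import FunctionalExtensionality Lia.
From mathcomp Require Import zify.
Set Implicit Arguments. Unset Strict Implicit. Unset Printing Implicit Defensive.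
Import Order.TTheory GRing.Theory Num.Theory.
Local Open Scope ring_scope.

Section Aux.
Variable R : realType.
Variable d : nat.
Local Notation cell := (cell d).
Implicit Types (T C D b : {set 'I_d}) (a r : cell) (F G : cell -> R).

Lemma sgnbE (x : bool) : sgnb R x = (-1) ^+ x.
Proof. by case: x. Qed.

Lemma sgnbN (x : bool) : sgnb R (~~ x) = - sgnb R x.
Proof. by case: x; rewrite /= ?opprK. Qed.

Lemma sgnbM (x y : bool) : sgnb R x * sgnb R y = sgnb R (x (+) y).
Proof. by case: x; case: y; rewrite /= ?mulr1 ?mul1r ?mulrNN ?mulr1. Qed.

Lemma sgnb_sq (x : bool) : sgnb R x * sgnb R x = 1.
Proof. by rewrite sgnbM addbb. Qed.

Definition chi (b : {set 'I_d}) (a : cell) : R := \prod_(w in b) sgnb R (a w).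

Lemma chiE (b : {set 'I_d}) (a : cell) : sgnb R (odd #|[set v in b | a v]|) = chi b a.
Proof.
rewrite sgnbE signr_odd /chi (eq_bigr (fun w => if a w then -1 else 1)); last by move=> w _; case: (a w).
rewrite -big_mkcondr -prodr_const; apply: eq_bigl => w; by rewrite inE.
Qed.

Definition flip (a : cell) (v : 'I_d) : cell := [ffun w => if w == v then ~~ a w else a w].

Lemma flipK v : cancel (flip^~ v) (flip^~ v).
Proof. move=> a; apply/ffunP => w; rewrite !ffunE; case: eqP => // _; by rewrite negbK. Qed.

Lemma sum_anti (F : cell -> R) v : (forall a, F (flip a v) = - F a) -> \sum_a F a = 0.
Proof.
move=> h; have E : \sum_a F a = \sum_a F (flip a v) := reindex_inj (can_inj (flipK v)).
move: E; rewrite [RHS](eq_bigr (fun a => - F a)) // sumrN => E; lra.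
Qed.

Lemma chi_flip (b : {set 'I_d}) (a : cell) v : v \in b -> chi b (flip a v) = - chi b a.
Proof.
move=> vb; rewrite /chi (big_setD1 v vb) [in RHS](big_setD1 v vb) /= ffunE eqxx sgnbN mulNr.
congr (- (_ * _)); apply: eq_bigr => w; rewrite !inE => /andP[/negbTE wv _]; by rewrite ffunE wv.
Qed.

Definition compl_inv (a : cell) : compl_cell (compl_cell a) = a.
Proof. apply/ffunP => w; by rewrite !ffunE negbK. Qed.

Lemma chi_compl (b : {set 'I_d}) (a : cell) : chi b (compl_cell a) = (-1) ^+ #|b| * chi b a.
Proof.
rewrite /chi -prodrN; apply: eq_bigr => w _; by rewrite ffunE sgnbN.
Qed.

Definition ncs : R := (#|{set 'I_d}|)%:R.

Lemma ncs_neq0 : ncs != 0.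
Proof. rewrite /ncs pnatr_eq0 -lt0n; apply/card_gt0P; by exists set0. Qed.

Definition tog (v : 'I_d) (b : {set 'I_d}) := if v \in b then b :\ v else v |: b.

Lemma togK v : cancel (tog v) (tog v).
Proof.
move=> b; rewrite /tog; case: (boolP (v \in b)) => vb.
  by rewrite !inE eqxx /= setD1K.
by rewrite !inE eqxx /= setU1K.
Qed.

Lemma orth (a a' : cell) : \sum_(b : {set 'I_d}) chi b a * chi b a' = if a == a' then ncs else 0.
Proof.
have E : forall b, chi b a * chi b a' = \prod_(w in b) sgnb R (a w (+) a' w).
  move=> b; rewrite /chi -big_split /=; apply: eq_bigr => w _; exact: sgnbM.
under eq_bigr do rewrite E.
case: eqP => [->|].
  rewrite (eq_bigr (fun _ => 1)); last by move=> b _; apply: big1 => w _; rewrite addbb.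
  by rewrite sumr_const /ncs.
move=> neq; have [v hv] : exists v, a v != a' v.
  apply/existsP; apply: contraT; rewrite negb_exists => /forallP h.
  by case: neq; apply/ffunP => w; move: (h w); rewrite negbK => /eqP.
have sv : sgnb R (a v (+) a' v) = -1 by move: hv; case: (a v); case: (a' v).
have H : forall b, \prod_(w in tog v b) sgnb R (a w (+) a' w) = - \prod_(w in b) sgnb R (a w (+) a' w).
  move=> b; rewrite /tog; case: (boolP (v \in b)) => vb.
    by rewrite [in RHS](big_setD1 v vb) /= sv mulN1r opprK.
  by rewrite big_setU1 //= sv mulN1r.
have E2 : \sum_(b : {set 'I_d}) \prod_(w in b) sgnb R (a w (+) a' w) =
   \sum_(b : {set 'I_d}) \prod_(w in tog v b) sgnb R (a w (+) a' w) := reindex_inj (can_inj (togK v)).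
move: E2; rewrite [RHS](eq_bigr _ (fun b _ => H b)) sumrN => E2; lra.
Qed.

Lemma sum_delta (g : cell -> R) (a' : cell) :
  \sum_a g a * (if a' == a then ncs else 0) = g a' * ncs.
Proof.
rewrite (bigD1 a') //= eqxx big1 ?addr0 // => a /negbTE; rewrite eq_sym => ->; by rewrite mulr0.
Qed.

Lemma parseval (f w : cell -> R) : \sum_a w a * f a =
  ncs^-1 * \sum_(b : {set 'I_d}) (\sum_a' chi b a' * f a') * (\sum_a w a * chi b a).
Proof.
rewrite [X in ncs^-1 * X](eq_bigr (fun b => \sum_a' \sum_a (f a' * w a) * (chi b a' * chi b a))); last first.
  move=> b _; rewrite mulr_suml; apply: eq_bigr => a' _; rewrite mulr_sumr; apply: eq_bigr => a _; ring.
rewrite exchange_big /=.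
rewrite [X in ncs^-1 * X](eq_bigr (fun a' => f a' * w a' * ncs)); last first.
  move=> a' _; rewrite exchange_big /=.
  rewrite (eq_bigr (fun a => (f a' * w a) * (if a' == a then ncs else 0))); last first.
    by move=> a _; rewrite -mulr_sumr orth.
  by rewrite (sum_delta (fun a => f a' * w a)).
rewrite -mulr_suml [_ * ncs]mulrC mulKf ?ncs_neq0 //; apply: eq_bigr => a _; by rewrite mulrC.
Qed.

Definition upd (T : {set 'I_d}) (a r : cell) : cell := [ffun v => if v \in T then r v else a v].
Definition avg (T : {set 'I_d}) (F : cell -> R) (a : cell) : R := (2 ^+ d)^-1 * \sum_r F (upd T a r).
Definition dep (C : {set 'I_d}) (F : cell -> R) :=
  forall a a' : cell, (forall v, v \in C -> a v = a' v) -> F a = F a'.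

Lemma card_cell : #|{: cell}| = (2 ^ d)%N.
Proof. by rewrite card_ffun card_bool card_ord. Qed.

Lemma sum_const_cell (c : R) : \sum_(r : cell) c = 2 ^+ d * c.
Proof. by rewrite sumr_const card_cell -[c *+ _]mulr_natl natrX. Qed.

Lemma two_pow_neq0 : (2 ^+ d : R) != 0.
Proof. by rewrite expf_neq0 // pnatr_eq0. Qed.

Lemma two_pow_gt0 : (0 : R) < 2 ^+ d.
Proof. by rewrite exprn_gt0. Qed.

Lemma sum_upd T (K : cell -> R) : \sum_a \sum_r K (upd T a r) = 2 ^+ d * \sum_a K a.
Proof.
pose sig (p : cell * cell) := (upd T p.1 p.2, upd T p.2 p.1).
have sigK : cancel sig sig.
  move=> [a r]; rewrite /sig /=; congr (_, _); apply/ffunP => v; rewrite !ffunE; by case: (v \in T).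
rewrite pair_big /= (reindex_inj (can_inj sigK)) /=.
have E : forall p : cell * cell, upd T (upd T p.1 p.2) (upd T p.2 p.1) = p.1.
  move=> [a r]; apply/ffunP => v; rewrite !ffunE /=; by case: (v \in T).
under eq_bigr do rewrite E.
rewrite -(pair_big predT predT (fun a (r : cell) => K a)) /=.
rewrite mulr_sumr; apply: eq_bigr => a _; by rewrite sum_const_cell.
Qed.

Lemma upd_out T (a r : cell) v : v \notin T -> upd T a r v = a v.
Proof. by rewrite ffunE => /negbTE ->. Qed.

Lemma upd_in T (a r : cell) v : v \in T -> upd T a r v = r v.
Proof. by rewrite ffunE => ->. Qed.

Lemma avg_sum T (F G : cell -> R) : dep (~: T) F ->
  \sum_a F a * G a = \sum_a F a * avg T G a.
Proof.
move=> dF; rewrite /avg.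
transitivity ((2 ^+ d)^-1 * \sum_a \sum_r F (upd T a r) * G (upd T a r)).
  by rewrite (sum_upd T (fun x => F x * G x)) mulKf ?two_pow_neq0.
rewrite mulr_sumr; apply: eq_bigr => a _; rewrite [RHS]mulrCA; congr (_ * _); rewrite mulr_sumr.
apply: eq_bigr => r _; congr (_ * _); apply: dF => v; rewrite inE => vT; by rewrite upd_out.
Qed.

Lemma dep_const C (c : R) : dep C (fun _ => c).
Proof. by []. Qed.

Lemma dep_sub C D F : C \subset D -> dep C F -> dep D F.
Proof. move=> /subsetP CD h a a' e; apply: h => v vC; apply: e; exact: CD. Qed.

Lemma avg_dep T C G : dep C G -> dep (C :&: ~: T) (avg T G).
Proof.
move=> h a a' e; rewrite /avg; congr (_ * _); apply: eq_bigr => r _; apply: h => v vC.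
rewrite !ffunE; case: ifP => // vT; apply: e; by rewrite !inE vC vT.
Qed.

Lemma avg_mull T (F G : cell -> R) a : dep (~: T) F -> avg T (fun x => F x * G x) a = F a * avg T G a.
Proof.
move=> h; rewrite /avg [RHS]mulrCA [in RHS]mulr_sumr; congr (_ * _); apply: eq_bigr => r _; congr (_ * _).
apply: h => v; rewrite inE => vT; by rewrite upd_out.
Qed.

Lemma avg_const T c a : avg T (fun _ => c) a = c.
Proof. by rewrite /avg sum_const_cell mulKf ?two_pow_neq0. Qed.

Lemma avg_add T F G a : avg T (fun x => F x + G x) a = avg T F a + avg T G a.
Proof. by rewrite /avg big_split mulrDr. Qed.

Lemma avg_sumr T (I : Type) (r : seq I) (P : pred I) (F : I -> cell -> R) a :
  avg T (fun x => \sum_(i <- r | P i) F i x) a = \sum_(i <- r | P i) avg T (F i) a.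
Proof. by rewrite /avg exchange_big mulr_sumr. Qed.

Lemma avg_mulr T F (c : R) a : avg T (fun x => F x * c) a = avg T F a * c.
Proof. by rewrite /avg -mulr_suml mulrA. Qed.

Lemma avg_gt0 T F a : (forall x, 0 < F x) -> 0 < avg T F a.
Proof.
move=> h; rewrite /avg mulr_gt0 ?invr_gt0 ?two_pow_gt0 //.
rewrite (bigD1 a) //= ltr_pwDl ?h // sumr_ge0 // => i _; exact: ltW.
Qed.

Lemma avg_sum1 T G : \sum_a avg T G a = \sum_a G a.
Proof.
have := @avg_sum T (fun _ => 1) G (@dep_const (~: T) 1).
move=> E.
have E1 : \sum_a G a = \sum_a 1 * G a by apply: eq_bigr => a _; rewrite mul1r.
have E2 : \sum_a avg T G a = \sum_a 1 * avg T G a by apply: eq_bigr => a _; rewrite mul1r.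
by rewrite E1 E2 E.
Qed.

Definition sgf (s t : 'I_d) (a : cell) : R := sgnb R (a s (+) a t).

Lemma sgfC s t a : sgf s t a = sgf t s a.
Proof. by rewrite /sgf addbC. Qed.

Lemma avg_sg_in T s t a : s != t -> s \in T -> avg T (sgf s t) a = 0.
Proof.
move=> st sT; rewrite /avg (@sum_anti _ s) ?mulr0 // => r.
have E : upd T a (flip r s) t = upd T a r t.
  rewrite /upd !ffunE; case: ifP => // _; by rewrite eq_sym (negbTE st).
rewrite /sgf E (upd_in a (flip r s) sT) (upd_in a r sT) /flip ffunE eqxx.
by rewrite -sgnbN addNb.
Qed.

Lemma avg_sg T s t a : s != t ->
  avg T (sgf s t) a = if (s \in T) || (t \in T) then 0 else sgf s t a.
Proof.
move=> st; case: (boolP (s \in T)) => sT /=; first exact: avg_sg_in.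
case: (boolP (t \in T)) => tT.
  rewrite (_ : sgf s t = sgf t s); last by apply: functional_extensionality => x; exact: sgfC.
  by apply: avg_sg_in; rewrite // eq_sym.
rewrite /avg (eq_bigr (fun _ => sgf s t a)) ?sum_const_cell ?mulKf ?two_pow_neq0 //.
by move=> r _; rewrite /sgf !upd_out.
Qed.

Lemma sum_chi_dep b C F : dep C F -> ~~ (b \subset C) -> \sum_a chi b a * F a = 0.
Proof.
move=> h /subsetPn [v vb vC]; apply: (@sum_anti _ v) => a.
rewrite chi_flip // mulNr; congr (- (_ * _)); apply: h => w wC; rewrite /flip ffunE.
case: eqP => // wv; by rewrite -wv wC in vC.
Qed.

Lemma sum_chi_pal b F : (forall a, F (compl_cell a) = F a) -> odd #|b| ->
  \sum_a chi b a * F a = 0.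
Proof.
move=> h ob.
have E : \sum_a chi b a * F a = \sum_a chi b (compl_cell a) * F (compl_cell a)
  := reindex_inj (can_inj compl_inv).
move: E; rewrite [RHS](eq_bigr (fun a => - (chi b a * F a))); last first.
  by move=> a _; rewrite chi_compl h -signr_odd ob expr1 mulN1r mulNr.
rewrite sumrN => E; lra.
Qed.

Lemma avg_mulr_dep T F G a : dep (~: T) F -> avg T (fun x => G x * F x) a = avg T G a * F a.
Proof.
move=> h; rewrite /avg -mulrA mulr_suml; congr (_ * _); apply: eq_bigr => r _; congr (_ * _).
apply: h => v; rewrite inE => vT; by rewrite upd_out.
Qed.

Lemma dep_mul C F G : dep C F -> dep C G -> dep C (fun x => F x * G x).
Proof. by move=> hF hG a a' h; rewrite (hF a a' h) (hG a a' h). Qed.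

Lemma dep_inv C F : dep C F -> dep C (fun x => (F x)^-1).
Proof. by move=> hF a a' h; rewrite (hF a a' h). Qed.

Lemma ln_prod (I : Type) (r : seq I) (P : pred I) (F : I -> R) :
  (forall i, P i -> 0 < F i) -> ln (\prod_(i <- r | P i) F i) = \sum_(i <- r | P i) ln (F i).
Proof.
move=> h; elim: r => [|x r IH]; first by rewrite !big_nil ln1.
rewrite !big_cons; case: ifP => // Px.
by rewrite lnM ?posrE ?IH ?h // prodr_gt0.
Qed.

Lemma ln_le_sub1 (x : R) : 0 < x -> ln x <= x - 1.
Proof.
move=> x0; have := expR_ge1Dx (ln x); rewrite lnK ?posrE // => h; lra.
Qed.

Lemma ln_lt_sub1 (x : R) : 0 < x -> x != 1 -> ln x < x - 1.
Proof.
move=> x0 x1; have : ln x != 0 by rewrite ln_eq0.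
move/expR_gt1Dx; rewrite lnK ?posrE // => h; lra.
Qed.

Section Pi.
Variable k : 'I_d -> 'I_d -> R.

Definition pi C a : R := 1 + \sum_(s in C) \sum_(t in C | (s < t)%N) sgnb R (a s (+) a t) * k s t.

Lemma ltn_neq (s t : 'I_d) : (s < t)%N -> s != t.
Proof. move=> st; apply/eqP => h; by rewrite h ltnn in st. Qed.

Lemma avg_pi T C a : avg T (pi C) a = pi (C :\: T) a.
Proof.
rewrite /pi avg_add avg_const avg_sumr; congr (1 + _).
rewrite (eq_bigr (fun s : 'I_d => \sum_(t in C | (s < t)%N)
   (if (s \in T) || (t \in T) then 0 else sgf s t a) * k s t)); last first.
  move=> s sC; rewrite avg_sumr; apply: eq_bigr => t /andP[_ st].
  by rewrite (avg_mulr T (sgf s t)) avg_sg // ltn_neq.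
rewrite big_mkcond [RHS]big_mkcond; apply: eq_bigr => s _; rewrite !inE.
case sT: (s \in T); case sC: (s \in C) => //=.
  by rewrite big1 // => t _; rewrite mul0r.
rewrite big_mkcond [RHS]big_mkcond; apply: eq_bigr => t _; rewrite !inE.
by case: (t \in T); case: (t \in C); case: (s < t)%N => /=; rewrite ?mul0r.
Qed.

Lemma dep_pi C : dep C (pi C).
Proof.
move=> a a' e; rewrite /pi; congr (1 + _); apply: eq_bigr => s sC; apply: eq_bigr => t /andP[tC _].
by rewrite (e s sC) (e t tC).
Qed.

Lemma pi_compl C a : pi C (compl_cell a) = pi C a.
Proof.
rewrite /pi; congr (1 + _); apply: eq_bigr => s _; apply: eq_bigr => t _.
by rewrite !ffunE addNb addbN negbK.
Qed.

Lemma pi_set0 a : pi set0 a = 1.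
Proof. by rewrite /pi big_set0 addr0. Qed.

Lemma pi_sub_pos C D : D \subset C -> (forall a, 0 < pi C a) -> forall a, 0 < pi D a.
Proof.
move=> DC h a; have -> : D = C :\: ~: D by rewrite setDE setCK; apply/esym/setIidPr.
rewrite -avg_pi; exact: avg_gt0.
Qed.

Lemma pi_pair (s t : 'I_d) a : (s < t)%N -> pi [set s; t] a = 1 + sgf s t a * k s t.
Proof.
move=> st; rewrite /pi; congr (1 + _).
have ns : s \notin [set t] by rewrite inE ltn_neq.
rewrite (big_setU1 _ ns) /= big_set1 !big_mkcondr !(big_setU1 _ ns) /= !big_set1 ltnn st.
by rewrite ltnn ltnNge ltnW //= !addr0 add0r.
Qed.

End Pi.

End Aux.

Section Main.
Variable R : realType.
Variable d : nat.
Variable e : rel 'I_d.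
Variable n : cell d -> nat.
Variable cs : seq {set 'I_d}.
Hypothesis sg_e : simple_graph e.
Hypothesis pcs : perfect_clique_seq e cs.
Hypothesis npos : (0 < ssize n)%N.
Hypothesis fpos : forall C, clique e C -> forall a, 0 < fmarg R n C a.
Hypothesis mc3 : max_clique_size3 e.

Local Notation cell := (cell d).
Implicit Types (T C D b : {set 'I_d}) (a r : cell) (F G : cell -> R).

Local Notation xi := (xi_hat R n).
Local Notation K := (size cs).
Local Notation Cj j := (nth set0 cs j).
Local Notation Sj j := (separator cs j).
Local Notation Hj j := (history cs j).
Local Notation PI := (pi xi).

Definition completeb D := [forall x, forall y, (x \in D) ==> (y \in D) ==> (x != y) ==> e x y].

Lemma completeP D : reflect (complete e D) (completeb D).
Proof.
apply: (iffP forallP) => [h x y xD yD xy|h x]; first by move/forallP: (h x) => /(_ y); rewrite xD yD xy.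
apply/forallP => y; apply/implyP => xD; apply/implyP => yD; apply/implyP; exact: h.
Qed.

Lemma clique_ext D : complete e D -> exists C, clique e C /\ D \subset C.
Proof.
move=> /completeP cD.
have P0 : completeb D && (D \subset D) by rewrite cD subxx.
case: (@arg_maxnP _ D (fun X => completeb X && (D \subset X)) (fun X : {set 'I_d} => #|X|) P0) => C /andP[cC DC] maxC.
exists C; split => //; split; first exact/completeP.
move=> D' /completeP cD' CD'; apply/eqP; rewrite eq_sym eqEcard CD' /=.
apply: maxC; rewrite cD' /=; exact: subset_trans DC CD'.
Qed.

Lemma Cj_clique j : (j < K)%N -> clique e (Cj j).
Proof. case: pcs => _ h _ _ jK; apply: h; exact: mem_nth. Qed.

Lemma clique_in_cs C : clique e C -> exists2 m, (m < K)%N & C = Cj m.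
Proof.
case: pcs => _ _ h _ /h Cin; exists (index C cs); by rewrite ?index_mem ?nth_index.
Qed.

Lemma hist_rec j : Hj j.+1 = Hj j :|: Cj j.
Proof. by rewrite /history big_ord_recr. Qed.

Lemma hist0 : Hj 0 = set0.
Proof. by rewrite /history big_ord0. Qed.

Lemma S0 : Sj 0 = set0.
Proof. by rewrite /separator hist0 setI0. Qed.

Lemma C_sub_H j k : (j < k)%N -> Cj j \subset Hj k.
Proof. move=> jk; rewrite /history; exact: (bigcup_sup (Ordinal jk)). Qed.

Lemma S_sub_C j : Sj j \subset Cj j.
Proof. exact: subsetIl. Qed.

Lemma S_sub_H j : Sj j \subset Hj j.
Proof. exact: subsetIr. Qed.

Lemma pi_C_pos j : (j < K)%N -> forall a, 0 < PI (Cj j) a.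
Proof.
move=> jK a; have := fpos (Cj_clique jK) a; rewrite /fmarg -/(pi _ _ _).
by rewrite pmulr_rgt0 // invr_gt0 exprn_gt0.
Qed.

Lemma pi_S_pos j : (j < K)%N -> forall a, 0 < PI (Sj j) a.
Proof.
case: j => [|j] jK a; first by rewrite S0 pi_set0.
case: pcs => _ _ _ /(_ j.+1); rewrite jK /= => /(_ isT) [i ij SC].
apply: (pi_sub_pos SC); apply: pi_C_pos; exact: ltn_trans ij jK.
Qed.

Definition Q k a : R := \prod_(j < k) (PI (Cj j) a / PI (Sj j) a).

Lemma dep_Q k : dep (Hj k) (Q k).
Proof.
move=> a a' h; apply: eq_bigr => j _.
have CH := C_sub_H (ltn_ord j).
congr (_ / _).
  by apply: (dep_sub CH (@dep_pi _ _ xi (Cj j))).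
by apply: (dep_sub (subset_trans (S_sub_C j) CH) (@dep_pi _ _ xi (Sj j))).
Qed.

Lemma Q_rec k a : Q k.+1 a = Q k a * (PI (Cj k) a / PI (Sj k) a).
Proof. by rewrite /Q big_ord_recr. Qed.

Lemma Q0 a : Q 0 a = 1.
Proof. by rewrite /Q big_ord0. Qed.

Lemma main_ind k : (k <= K)%N -> forall m, (m < k)%N -> forall phi, dep (Cj m) phi ->
  \sum_a Q k a * phi a = \sum_a PI (Cj m) a * phi a.
Proof.
elim: k => [//|k IH] kK m mk phi dphi.
have kK' : (k < K)%N := kK.
have Spos := pi_S_pos kK'.
have Sne : forall a, PI (Sj k) a != 0 by move=> a; rewrite gt_eqF.
have dS : dep (~: ~: Hj k) (PI (Sj k)).
  rewrite setCK; exact: (dep_sub (S_sub_H k) (@dep_pi _ _ xi (Sj k))).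
move: mk; rewrite ltnS leq_eqVlt => /orP[/eqP mk|mk].
-
  subst m.
  case: k IH kK kK' Spos Sne dS dphi => [|k] IH kK kK' Spos Sne dS dphi.
    apply: eq_bigr => a _; by rewrite Q_rec Q0 S0 pi_set0 divr1 mul1r.
  pose psi a := avg (~: Hj k.+1) (fun x => PI (Cj k.+1) x * phi x) a * (PI (Sj k.+1) a)^-1.
  have E1 : \sum_a Q k.+2 a * phi a = \sum_a Q k.+1 a * psi a.
    transitivity (\sum_a Q k.+1 a * (PI (Cj k.+1) a * phi a * (PI (Sj k.+1) a)^-1)).
      by apply: eq_bigr => a _; rewrite Q_rec; ring.
    rewrite (@avg_sum _ _ (~: Hj k.+1) (Q k.+1)); last by rewrite setCK; exact: dep_Q.
    apply: eq_bigr => a _; congr (_ * _); rewrite /psi.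
    exact: (@avg_mulr_dep _ _ _ (fun x => (PI (Sj k.+1) x)^-1) (fun x => PI (Cj k.+1) x * phi x) a (dep_inv dS)).
  case: pcs => _ _ _ /(_ k.+1); rewrite kK' /= => /(_ isT) [i ik SC].
  have dpsi : dep (Sj k.+1) psi.
    apply: dep_mul; last exact: dep_inv (@dep_pi _ _ xi (Sj k.+1)).
    have := @avg_dep _ _ (~: Hj k.+1) (Cj k.+1) _ (dep_mul (@dep_pi _ _ xi (Cj k.+1)) dphi).
    by rewrite setCK.
  rewrite E1 (IH (ltnW kK') i ik psi (dep_sub SC dpsi)).
  transitivity (\sum_a psi a * PI (Cj i) a); first by apply: eq_bigr => a _; rewrite mulrC.
  rewrite (@avg_sum _ _ (~: Sj k.+1) psi); last by rewrite setCK.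
  transitivity (\sum_a avg (~: Hj k.+1) (fun x => PI (Cj k.+1) x * phi x) a); last exact: avg_sum1.
  apply: eq_bigr => a _; rewrite avg_pi setDE setCK (setIidPr SC) /psi mulfVK //.
- transitivity (\sum_a (Q k a * phi a) * (PI (Cj k) a * (PI (Sj k) a)^-1)).
    by apply: eq_bigr => a _; rewrite Q_rec; ring.
  rewrite (@avg_sum _ _ (~: Hj k) (fun a => Q k a * phi a)); last first.
    rewrite setCK; apply: dep_mul; first exact: dep_Q.
    exact: dep_sub (C_sub_H mk) dphi.
  rewrite -(IH (ltnW kK') m mk phi dphi).
  apply: eq_bigr => a _.
  rewrite (@avg_mulr_dep _ _ _ (fun x => (PI (Sj k) x)^-1) (PI (Cj k)) a (dep_inv dS)).
  by rewrite avg_pi setDE setCK /separator mulfV ?mulr1 //; exact: Sne.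
Qed.

Lemma K_pos : (0 < K)%N.
Proof.
case: mc3 => [[C [cC _]] _]; case: (clique_in_cs cC) => m mK _; exact: leq_ltn_trans mK.
Qed.

Lemma Q_sum : \sum_a Q K a = 2 ^+ d.
Proof.
transitivity (\sum_a Q K a * 1); first by apply: eq_bigr => a _; rewrite mulr1.
rewrite (@main_ind K (leqnn K) 0 K_pos (fun _ => 1) (@dep_const _ _ (Cj 0) 1)).
transitivity (\sum_a PI (Cj 0) a); first by apply: eq_bigr => a _; rewrite mulr1.
rewrite -(@avg_sum1 _ _ setT) (eq_bigr (fun _ => 1)) ?sum_const_cell ?mulr1 //.
by move=> a _; rewrite avg_pi setDT pi_set0.
Qed.

Lemma xi_sym (s t : 'I_d) : xi s t = xi t s.
Proof. rewrite /xi_hat; congr (_ * _); apply: eq_bigr => a _; by rewrite addbC. Qed.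

Lemma sum_sgf (s t : 'I_d) : s != t -> \sum_a sgf R s t a = 0.
Proof.
move=> st; rewrite -(@avg_sum1 _ _ [set s]) big1 // => a _; apply: avg_sg_in => //; exact: set11.
Qed.

Lemma pi_pair' (s t : 'I_d) a : s != t -> PI [set s; t] a = 1 + sgf R s t a * xi s t.
Proof.
rewrite neq_ltn => /orP[st|ts]; first exact: pi_pair.
by rewrite setUC -/([set t; s]) pi_pair // sgfC xi_sym.
Qed.

Lemma pi_sgf C (s t : 'I_d) : s != t -> s \in C -> t \in C ->
  \sum_a PI C a * sgf R s t a = 2 ^+ d * xi s t.
Proof.
move=> st sC tC.
transitivity (\sum_a sgf R s t a * PI C a); first by apply: eq_bigr => a _; rewrite mulrC.
rewrite (@avg_sum _ _ (~: [set s; t]) (sgf R s t)); last first.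
  rewrite setCK => a a' h; rewrite /sgf (h s) ?(h t) // !inE eqxx ?orbT //.
have sub : [set s; t] \subset C by rewrite subUset !sub1set sC tC.
rewrite (eq_bigr (fun a => sgf R s t a + xi s t)); last first.
  move=> a _; rewrite avg_pi setDE setCK (setIidPr sub) pi_pair' //.
  by rewrite mulrDr mulr1 mulrA /sgf sgnb_sq mul1r.
by rewrite big_split /= sum_sgf // add0r sum_const_cell.
Qed.

Lemma Q_corr (s t : 'I_d) : s != t -> e s t -> \sum_a Q K a * sgf R s t a = 2 ^+ d * xi s t.
Proof.
move=> st est.
have cst : complete e [set s; t].
  case: sg_e => sym _.
  move=> x y; rewrite !inE => /orP[/eqP->|/eqP->] /orP[/eqP->|/eqP->]; rewrite ?eqxx //.
  by rewrite sym.
case: (clique_ext cst) => C [cC sub]; case: (clique_in_cs cC) => m mK CE.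
have dsg : dep (Cj m) (sgf R s t).
  apply: (dep_sub (C := [set s; t])); first by rewrite -CE.
  move=> a a' h; rewrite /sgf (h s) ?(h t) // !inE eqxx ?orbT //.
rewrite (main_ind (leqnn K) mK dsg) pi_sgf //; rewrite -CE; apply: (subsetP sub); by rewrite !inE eqxx ?orbT.
Qed.

Lemma hist_card k : #|Hj k| = (\sum_(j < k) (#|Cj j| - #|Sj j|))%N.
Proof.
elim: k => [|k IH]; first by rewrite hist0 cards0 big_ord0.
rewrite hist_rec cardsU big_ord_recr /= -IH /separator setIC addnBA //.
by rewrite subset_leq_card // subsetIl.
Qed.

Lemma hist_full : Hj K = setT.
Proof.
apply/setP => v; rewrite inE.
have cv : complete e [set v] by move=> x y; rewrite !inE => /eqP-> /eqP->; rewrite eqxx.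
case: (clique_ext cv) => C [cC sub]; case: (clique_in_cs cC) => m mK CE.
apply: (subsetP (C_sub_H mK)); rewrite -CE; apply: (subsetP sub); exact: set11.
Qed.

Lemma sum_diff : (\sum_(j < K) (#|Cj j| - #|Sj j|))%N = d.
Proof. by rewrite -hist_card hist_full cardsT card_ord. Qed.

Lemma fE C a : fmarg R n C a = (2 ^+ #|C|)^-1 * PI C a.
Proof. by []. Qed.

Lemma cf_eq a : closed_form R n cs a = (2 ^+ d)^-1 * Q K a.
Proof.
rewrite /closed_form.
have g0 : fmarg R n (Sj 0) a = 1 by rewrite fE S0 cards0 expr0 invr1 mul1r pi_set0.
have -> : \prod_(1 <= j < K) fmarg R n (Sj j) a = \prod_(j < K) fmarg R n (Sj j) a.
  have E : \prod_(j < K) fmarg R n (Sj j) a = \prod_(0 <= j < K) fmarg R n (Sj j) a by rewrite big_mkord.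
  by rewrite E (big_ltn K_pos) g0 mul1r.
rewrite -prodf_div.
rewrite (eq_bigr (fun j : 'I_K => (2 ^+ (#|Cj j| - #|Sj j|))^-1 * (PI (Cj j) a / PI (Sj j) a))); last first.
  move=> j _; have sc := subset_leq_card (S_sub_C j).
  have Sp := pi_S_pos (ltn_ord j) a.
  rewrite !fE -{1}(subnK sc) exprD; field.
  by rewrite gt_eqF // !expf_neq0 // pnatr_eq0.
by rewrite big_split /= prodfV prodrXr sum_diff.
Qed.

Lemma Q_pos a : 0 < Q K a.
Proof.
apply: prodr_gt0 => j _; apply: divr_gt0; [exact: pi_C_pos | exact: pi_S_pos].
Qed.

Lemma cf_pos a : 0 < closed_form R n cs a.
Proof. by rewrite cf_eq mulr_gt0 ?invr_gt0 ?(two_pow_gt0 R d) ?Q_pos. Qed.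

Lemma cf_sum : \sum_a closed_form R n cs a = 1.
Proof.
under eq_bigr do rewrite cf_eq.
by rewrite -mulr_sumr Q_sum mulVf // (two_pow_neq0 R d).
Qed.

Lemma Q_compl a : Q K (compl_cell a) = Q K a.
Proof. by apply: eq_bigr => j _; rewrite !pi_compl. Qed.

Lemma cf_pal : palindromic (fun a => closed_form R n cs a).
Proof. by move=> a; rewrite !cf_eq Q_compl. Qed.

Lemma cf_corr (s t : 'I_d) : s != t -> e s t ->
  \sum_a closed_form R n cs a * sgf R s t a = xi s t.
Proof.
move=> st est; under eq_bigr do rewrite cf_eq -mulrA.
by rewrite -mulr_sumr Q_corr // mulKf // (two_pow_neq0 R d).
Qed.

Lemma cf_ln a : ln (closed_form R n cs a) =
  ln ((2 ^+ d)^-1) + \sum_(j < K) (ln (PI (Cj j) a) - ln (PI (Sj j) a)).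
Proof.
rewrite cf_eq lnM ?posrE ?invr_gt0 ?(two_pow_gt0 R d) ?Q_pos //; congr (_ + _).
rewrite /Q ln_prod; last by move=> j _; apply: divr_gt0; [exact: pi_C_pos | exact: pi_S_pos].
apply: eq_bigr => j _; rewrite ln_div // posrE; [exact: pi_C_pos | exact: pi_S_pos].
Qed.

Lemma cf_lam b : b != set0 -> (forall j, (j < K)%N -> ~~ (b \subset Cj j)) ->
  \sum_a chi R b a * ln (closed_form R n cs a) = 0.
Proof.
move=> b0 hb.
under eq_bigr do rewrite cf_ln mulrDr mulr_sumr.
rewrite big_split /=.
have -> : \sum_a chi R b a * ln ((2 ^+ d)^-1 : R) = 0.
  apply: (@sum_chi_dep _ _ b set0 (fun _ => ln ((2 ^+ d)^-1 : R))) => //.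
  by rewrite subset0.
rewrite add0r exchange_big /= big1 // => j _.
under eq_bigr do rewrite mulrBr.
rewrite sumrB.
have hC := hb j (ltn_ord j).
rewrite (@sum_chi_dep _ _ b (Cj j) (fun a => ln (PI (Cj j) a))) //; last first.
  by move=> x y h; rewrite (@dep_pi _ _ xi (Cj j) x y h).
rewrite (@sum_chi_dep _ _ b (Sj j) (fun a => ln (PI (Sj j) a))) ?subr0 //.
  by move=> x y h; rewrite (@dep_pi _ _ xi (Sj j) x y h).
apply: contra hC => bS; exact: subset_trans bS (S_sub_C j).
Qed.

Lemma lam_eq (q : cell -> R) b : lambda q b = (2 ^+ d)^-1 * \sum_a chi R b a * ln (q a).
Proof. by rewrite /lambda; congr (_ * _); apply: eq_bigr => a _; rewrite chiE. Qed.

Lemma lam0 (q : cell -> R) b : lambda q b = 0 -> \sum_a chi R b a * ln (q a) = 0.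
Proof. rewrite lam_eq => /eqP; rewrite mulf_eq0 invr_eq0 (negbTE (two_pow_neq0 R d)) /= => /eqP //. Qed.

Lemma cf_model : pal_ising e (fun a => closed_form R n cs a).
Proof.
case: mc3 => _ le3.
split.
- split; [exact: cf_pos | exact: cf_sum].
- exact: cf_pal.
- move=> b b3; rewrite lam_eq; apply/eqP; rewrite mulf_eq0; apply/orP; right; apply/eqP.
  case: (boolP (odd #|b|)) => ob.
    by apply: sum_chi_pal => // a; rewrite /= -cf_pal.
  apply: cf_lam.
    by apply/eqP => b0; rewrite b0 cards0 in b3.
  move=> j jK; apply/negP => bC.
  have := subset_leq_card bC; have := le3 _ (Cj_clique jK).
  move: b3 ob; rewrite leq_eqVlt => /orP[/eqP <- //|]; lia.
- move=> i j ij nij; rewrite lam_eq; apply/eqP; rewrite mulf_eq0; apply/orP; right; apply/eqP.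
  apply: cf_lam.
    by apply/eqP => /setP /(_ i); rewrite !inE eqxx.
  move=> m mK; apply/negP => /subsetP sub.
  case: (Cj_clique mK) => cC _.
  have := cC i j (sub i (setU11 _ _)) (sub j (setU1r _ (set11 _))) ij.
  by rewrite (negbTE nij).
Qed.

Lemma model_good (q : cell -> R) : pal_ising e q -> forall b,
  \sum_a chi R b a * ln (q a) != 0 ->
  b = set0 \/ exists s t, [/\ s != t, e s t & b = [set s; t]].
Proof.
case=> _ pal hi hij b nz.
have [b0|b1] := eqVneq #|b| 0%N; first by left; exact: cards0_eq.
have [b1'|b2] := eqVneq #|b| 1%N.
  exfalso; move/negP: nz; apply; apply/eqP; apply: sum_chi_pal; last by rewrite b1'.
  by move=> a; rewrite -pal.
have [b2'|b3] := eqVneq #|b| 2%N.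
  move/eqP/cards2P: b2' => [x [y [xy bE]]].
  case: (boolP (e x y)) => exy; first by right; exists x, y.
  exfalso; move/negP: nz; apply; apply/eqP; rewrite bE; exact: lam0 (hij x y xy exy).
exfalso; move/negP: nz; apply; apply/eqP; apply: lam0; apply: hi.
move: b1 b2 b3; lia.
Qed.

Lemma chi_pair (s t : 'I_d) a : s != t -> chi R [set s; t] a = sgf R s t a.
Proof.
move=> st; have ns : s \notin [set t] by rewrite inE.
by rewrite /chi (big_setU1 _ ns) /= big_set1 sgnbM.
Qed.

Local Notation N := ((ssize n)%:R : R).
Local Notation p := (fun a => closed_form R n cs a).

Lemma N_neq0 : N != 0.
Proof. by rewrite pnatr_eq0 -lt0n. Qed.

Lemma sum_n : \sum_a ((n a)%:R : R) = N.
Proof. by rewrite /ssize natr_sum. Qed.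

Lemma W_moment b : (b = set0 \/ exists s t, [/\ s != t, e s t & b = [set s; t]]) ->
  \sum_a ((n a)%:R - N * p a) * chi R b a = 0.
Proof.
case=> [->|[s [t [st est ->]]]].
  under eq_bigr do rewrite /chi big_set0 mulr1.
  by rewrite sumrB sum_n -mulr_sumr cf_sum mulr1 subrr.
under eq_bigr do rewrite chi_pair // mulrBl -mulrA.
rewrite sumrB -mulr_sumr cf_corr //.
have -> : \sum_a (n a)%:R * sgf R s t a = N * xi s t.
  rewrite /xi_hat mulrA mulfV ?N_neq0 // mul1r; apply: eq_bigr => a _; by rewrite mulrC.
by rewrite subrr.
Qed.

Lemma key (q : cell -> R) : pal_ising e q ->
  loglik n q - loglik n p = N * \sum_a p a * (ln (q a) - ln (p a)).
Proof.
move=> qm.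
pose D a := ln (q a) - ln (p a).
have WD : \sum_a ((n a)%:R - N * p a) * D a = 0.
  rewrite parseval big1 ?mulr0 // => b _.
  case: (eqVneq (\sum_a' chi R b a' * D a') 0) => [->|nz]; first by rewrite mul0r.
  rewrite W_moment ?mulr0 //.
  move: nz; rewrite /D; under eq_bigr do rewrite mulrBr; rewrite sumrB.
  case: (eqVneq (\sum_a chi R b a * ln (q a)) 0) => [->|nzq _]; last exact: model_good qm b nzq.
  rewrite sub0r oppr_eq0 => nzp; exact: model_good cf_model b nzp.
rewrite /loglik -sumrB.
transitivity (\sum_a ((n a)%:R - N * p a) * D a + \sum_a N * p a * D a).
  rewrite -big_split /=; apply: eq_bigr => a _; rewrite /D; ring.
by rewrite WD add0r mulr_sumr; apply: eq_bigr => a _; rewrite mulrA.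
Qed.

Lemma mle_main : is_unique_mle e n p.
Proof.
have term : forall q : cell -> R, pal_ising e q -> forall a,
    p a * (ln (q a) - ln (p a)) <= q a - p a.
  move=> q [[qpos _] _ _ _] a; have pp := cf_pos a; have qp := qpos a.
  rewrite -ln_div ?posrE //; have := ln_le_sub1 (divr_gt0 qp pp).
  rewrite -(ler_pM2l pp) => h; apply: (le_trans h); rewrite mulrBr mulr1 mulrCA mulfV ?mulr1 //.
  by rewrite gt_eqF.
have sum_le : forall q : cell -> R, pal_ising e q ->
    \sum_a p a * (ln (q a) - ln (p a)) <= 0.
  move=> q qm; apply: (le_trans (ler_sum _ (fun a _ => term q qm a))).
  case: qm => [[_ qs] _ _ _]; by rewrite sumrB qs cf_sum subrr.
have Npos : 0 < N by rewrite ltr0n.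
split; first exact: cf_model.
- move=> q qm; rewrite -subr_le0 key // pmulr_rle0 //; exact: sum_le.
- move=> q qm eqll; apply: functional_extensionality => a.
  have S0' : \sum_a p a * (ln (q a) - ln (p a)) = 0.
    have := key qm; rewrite eqll subrr => /esym/eqP; rewrite mulf_eq0 (negbTE N_neq0) /= => /eqP //.
  have S1 : \sum_a ((q a - p a) - p a * (ln (q a) - ln (p a))) = 0.
    case: qm (qm) => [[_ qs] _ _ _] qm.
    by rewrite sumrB S0' subr0 sumrB qs cf_sum subrr.
  have Hnn : forall a', predT a' -> 0 <= (q a' - p a') - p a' * (ln (q a') - ln (p a')).
    by move=> a' _; rewrite subr_ge0; exact: term q qm a'.
  have := @psumr_eq0P _ _ predT _ Hnn S1 a isT.
  case: qm => [[qpos _] _ _ _]; have pp := cf_pos a; have qp := qpos a.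
  apply: contra_eq => nq.
  have x1 : q a / p a != 1.
    apply: contra nq => /eqP h; apply/eqP; move: h => /(congr1 (fun x => x * closed_form R n cs a)); rewrite divfK ?mul1r ?gt_eqF //.
  have := ln_lt_sub1 (divr_gt0 qp pp) x1; rewrite ln_div ?posrE // => h.
  rewrite subr_eq0; apply/negP => /eqP E.
  have : p a * (ln (q a) - ln (p a)) < q a - p a.
    rewrite -(ltr_pM2l pp) in h; apply: (lt_le_trans h).
    by rewrite mulrBr mulr1 mulrCA mulfV ?mulr1 ?gt_eqF.
  by rewrite E ltxx.
Qed.

End Main.

Theorem proposition5p3 (R : realType) (d : nat) (e : rel 'I_d)
    (n : cell d -> nat) (cs : seq {set 'I_d}) :
  simple_graph e -> chordal e -> max_clique_size3 e ->
  perfect_clique_seq e cs ->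
  (0 < ssize n)%N ->
  (forall C, clique e C -> forall a, 0 < fmarg R n C a) ->
  is_unique_mle e n (fun a => closed_form R n cs a).
Proof.
move=> sg _ mc pcs np fp; exact: (mle_main sg pcs np fp mc).
Qed.
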